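(* Let $k\ge1$ and let $A_k$ be the matrix defined below. The Graver basis $\mathcal{G}(A_k)$ is the disjoint union of the set $$\pm\left\{(-\mathbf{v}_1,\,-\mathbf{1}_k+\mathbf{v}_1,\,\mathbf{v}_2,\,\mathbf{1}_k-\mathbf{v}_2,\,-1,\,1)^{\mathsf T}:\mathbf{v}_1,\mathbf{v}_2\in\{0,1\}^k\right\}$$ and the sets $$\pm\left\{(\mathbf{e}_i,-\mathbf{e}_i,\mathbf{0}_k,\mathbf{0}_k,0,0)^{\mathsf T}:i\in[k]\right\},\qquad \pm\left\{(\mathbf{0}_k,\mathbf{0}_k,\mathbf{e}_i,-\mathbf{e}_i,0,0)^{\mathsf T}:i\in[k]\right\},$$ where $\mathbf{e}_1,\dots,\mathbf{e}_k$ are the standard unit vectors of $\mathbb{Z}^k$ and $\pm S:=S\cup(-S)$.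
   Context: $I_k$ is the $k\times k$ identity, $\mathbf{1}_k$ the all-ones vector and $\mathbf{0}_k$ the zero vector in $\mathbb{Z}^k$. Define $$A_k=\begin{pmatrix} I_k & I_k & 0 & 0 & -\mathbf{1}_k & \mathbf{0}\\ 0&0&I_k&I_k&\mathbf{0}&-\mathbf{1}_k\\ 0&0&0&0&1&1\end{pmatrix}\in\mathbb{Z}^{(2k+1)\times(4k+2)}$$ (zero blocks of appropriate sizes; last two columns are single columns). For vectors $\mathbf{u},\mathbf{v}\in\mathbb{Z}^n$, $\mathbf{u}\sqsubseteq\mathbf{v}$ iff $u_iv_i\ge0$ and $|u_i|\le|v_i|$ for all $i$. The Graver basis $\mathcal{G}(A)$ of $A\in\mathbb{Z}^{d\times n}$ is the set of $\sqsubseteq$-minimal elements of $(\ker(A)\cap\mathbb{Z}^n)\setminus\{\mathbf{0}\}$. *)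

(* Defs.v *)
From HB Require Import structures.
From mathcomp Require Import all_boot all_order all_algebra.
Set Implicit Arguments. Unset Strict Implicit. Unset Printing Implicit Defensive.
Import Order.TTheory GRing.Theory Num.Theory.
Local Open Scope ring_scope.

Notation ncols k := ((((k + k) + k) + k) + 1 + 1)%N.
Notation nrows k := ((k + k) + 1)%N.

Definition A_mat (k : nat) : 'M[int]_(nrows k, ncols k) :=
  col_mx
    (col_mx
       (row_mx (row_mx (row_mx (row_mx (row_mx 1%:M 1%:M) 0) 0)
                 (- const_mx 1)) 0)
       (row_mx (row_mx (row_mx (row_mx (row_mx 0 0) 1%:M) 1%:M) 0)
                 (- const_mx 1)))
    (row_mx (row_mx (row_mx (row_mx (row_mx 0 0) 0) 0) 1) 1).

Definition blkvec (k : nat) (a b c d : 'cV[int]_k) (s t : int) : 'cV[int]_(ncols k) :=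
  col_mx (col_mx (col_mx (col_mx (col_mx a b) c) d) s%:M) t%:M.

Definition conf_le (n : nat) (u v : 'cV[int]_n) : Prop :=
  forall i, 0 <= u i 0 * v i 0 /\ `|u i 0| <= `|v i 0|.

Definition in_ker (d n : nat) (A : 'M[int]_(d, n)) (x : 'cV[int]_n) : Prop :=
  A *m x = 0.

Definition graver (d n : nat) (A : 'M[int]_(d, n)) (x : 'cV[int]_n) : Prop :=
  [/\ in_ker A x, x <> 0 &
      forall y, in_ker A y -> y <> 0 -> conf_le y x -> y = x].

Definition pm (n : nat) (S : 'cV[int]_n -> Prop) (x : 'cV[int]_n) : Prop :=
  S x \/ S (- x).

Definition is01 (k : nat) (v : 'cV[int]_k) : Prop :=
  forall i, v i 0 = 0 \/ v i 0 = 1.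

Definition ones (k : nat) : 'cV[int]_k := const_mx 1.
Definition evec (k : nat) (i : 'I_k) : 'cV[int]_k := delta_mx i 0.

Definition S1 (k : nat) (x : 'cV[int]_(ncols k)) : Prop :=
  exists v1 v2 : 'cV[int]_k, [/\ is01 v1, is01 v2 &
    x = blkvec (- v1) (- ones k + v1) v2 (ones k - v2) (-1) 1].

Definition S2 (k : nat) (x : 'cV[int]_(ncols k)) : Prop :=
  exists i : 'I_k, x = blkvec (evec i) (- evec i) 0 0 0 0.

Definition S3 (k : nat) (x : 'cV[int]_(ncols k)) : Prop :=
  exists i : 'I_k, x = blkvec 0 0 (evec i) (- evec i) 0 0.

(* Main.v *)
Require Import Defs.
From HB Require Import structures.
From mathcomp Require Import all_boot all_order all_algebra.
From mathcomp Require Import zify ring lra.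
Import Order.TTheory GRing.Theory Num.Theory.
Local Open Scope ring_scope.

Lemma scalar_inj (s t : int) : (s%:M : 'M[int]_1) = t%:M -> s = t.
Proof. by move/matrixP/(_ ord0 ord0); rewrite !mxE. Qed.

Lemma blkvec_inj k a b c d s t a' b' c' d' s' t' :
  @blkvec k a b c d s t = blkvec a' b' c' d' s' t' ->
  [/\ a = a', b = b', c = c', d = d' & s = s' /\ t = t'].
Proof.
rewrite /blkvec => /eq_col_mx [/eq_col_mx [/eq_col_mx [/eq_col_mx
  [/eq_col_mx [-> ->] ->] ->] /scalar_inj ->] /scalar_inj ->]. by [].
Qed.

Lemma blkvecN k a b c d s t :
  - @blkvec k a b c d s t = blkvec (-a) (-b) (-c) (-d) (-s) (-t).
Proof. by rewrite /blkvec !opp_col_mx !raddfN. Qed.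

Lemma blkvec0 k : @blkvec k 0 0 0 0 0 0 = 0.
Proof. by rewrite /blkvec !raddf0 !col_mx0. Qed.

Lemma blkvec_surj k (x : 'cV[int]_(ncols k)) :
  exists a b c d s t, x = @blkvec k a b c d s t.
Proof.
set u := usubmx x.
exists (usubmx (usubmx (usubmx (usubmx u)))), (dsubmx (usubmx (usubmx (usubmx u)))),
  (dsubmx (usubmx (usubmx u))), (dsubmx (usubmx u)), (dsubmx u 0 0), (dsubmx x 0 0).
by rewrite /blkvec -!mx11_scalar !vsubmxK.
Qed.

Lemma conf_col m n (u1 v1 : 'cV[int]_m) (u2 v2 : 'cV[int]_n) :
  conf_le (col_mx u1 u2) (col_mx v1 v2) <-> conf_le u1 v1 /\ conf_le u2 v2.
Proof.
split=> [H|[H1 H2] i].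
  split=> i; [move: (H (lshift _ i)) | move: (H (rshift _ i))];
  by rewrite ?col_mxEu ?col_mxEd.
rewrite -(splitK i); case: (split i) => j /=; rewrite ?col_mxEu ?col_mxEd; by [].
Qed.

Lemma conf_scal (s s' : int) :
  conf_le (s%:M : 'cV_1) s'%:M <-> 0 <= s * s' /\ `|s| <= `|s'|.
Proof.
split=> [/(_ ord0)|H i]; rewrite ?(ord1 i) !mxE eqxx !mulr1n //.
Qed.

Lemma conf_blk k a b c d s t a' b' c' d' s' t' :
  conf_le (@blkvec k a b c d s t) (blkvec a' b' c' d' s' t') <->
  [/\ conf_le a a', conf_le b b', conf_le c c', conf_le d d' &
     (0 <= s * s' /\ `|s| <= `|s'|) /\ (0 <= t * t' /\ `|t| <= `|t'|)].
Proof.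
rewrite /blkvec !conf_col !conf_scal.
split=> [[[[[[H1 H2] H3] H4] H5] H6]|[H1 H2 H3 H4 [[H5 H5'] [H6 H6']]]].
  by split => //; split.
exact: (conj (conj (conj (conj (conj H1 H2) H3) H4) (conj H5 H5')) (conj H6 H6')).
Qed.

Lemma cV0P n (M : 'cV[int]_n) : M = 0 <-> forall i, M i 0 = 0.
Proof.
split=> [-> i|H]; first by rewrite mxE.
by apply/matrixP => i j; rewrite (ord1 j) H mxE.
Qed.

Lemma ker_blk k a b c d s t :
  in_ker (A_mat k) (@blkvec k a b c d s t) <->
  [/\ forall i, a i 0 + b i 0 = s, forall i, c i 0 + d i 0 = t & s + t = 0].
Proof.
rewrite /in_ker /A_mat /blkvec !mul_col_mx !mul_row_col.
rewrite !mul1mx !mul0mx ?addr0 ?add0r !mulNmx !mul_mx_scalar.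
split=> [/eqP|[H1 H2 H3]].
  rewrite !col_mx_eq0 => /andP[/andP[/eqP/cV0P H1 /eqP/cV0P H2] /eqP H3]; split.
  - by move=> i; move: (H1 i); rewrite !mxE mulr1 => /eqP; rewrite subr_eq0 => /eqP.
  - by move=> i; move: (H2 i); rewrite !mxE mulr1 => /eqP; rewrite subr_eq0 => /eqP.
  - by apply: scalar_inj; rewrite raddfD H3 raddf0.
apply/eqP; rewrite !col_mx_eq0; apply/andP; split; [apply/andP; split|]; apply/eqP.
- by apply/cV0P=> i; rewrite !mxE mulr1 H1 subrr.
- by apply/cV0P=> i; rewrite !mxE mulr1 H2 subrr.
- by rewrite -raddfD H3 raddf0.
Qed.

Lemma confN n (x y : 'cV[int]_n) : conf_le (- y) (- x) <-> conf_le y x.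
Proof.
by split=> H i; move: (H i); rewrite !mxE ?mulrNN ?normrN.
Qed.

Lemma kerN d n (A : 'M[int]_(d, n)) x : in_ker A x -> in_ker A (- x).
Proof. by rewrite /in_ker mulmxN => ->; rewrite oppr0. Qed.

Lemma neq0N n (x : 'cV[int]_n) : x <> 0 -> - x <> 0.
Proof. by move=> H /eqP; rewrite oppr_eq0 => /eqP. Qed.

Lemma S1_min k x y : S1 x -> in_ker (A_mat k) y -> y <> 0 -> conf_le y x -> y = x.
Proof.
case=> v1 [v2 [h1 h2 ->]].
have [a [b [c [d [s [t ->]]]]]] := blkvec_surj _ y.
case/ker_blk => Hab Hcd Hst Hnz /conf_blk [Ca Cb Cc Cd [[Cs1 Cs2] [Ct1 Ct2]]].
rewrite /ones in Ca Cb Cc Cd *.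
have [s0|s1] : s = 0 \/ s = -1 by lia.
  exfalso; apply: Hnz; rewrite -(blkvec0 k).
  have t0 : t = 0 by lia.
  rewrite s0 t0; congr blkvec; apply/matrixP=> i j; rewrite (ord1 j);
  move: (Ca i) (Cb i) (Cc i) (Cd i) (Hab i) (Hcd i); rewrite !mxE;
  case: (h1 i) => ->; case: (h2 i) => ->; lia.
have t1 : t = 1 by lia.
rewrite s1 t1; congr blkvec; apply/matrixP=> i j; rewrite (ord1 j);
  move: (Ca i) (Cb i) (Cc i) (Cd i) (Hab i) (Hcd i); rewrite !mxE;
  case: (h1 i) => ->; case: (h2 i) => ->; lia.
Qed.

Lemma S2_min k x y : S2 x -> in_ker (A_mat k) y -> y <> 0 -> conf_le y x -> y = x.
Proof.
case=> i0 ->.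
have [a [b [c [d [s [t ->]]]]]] := blkvec_surj _ y.
case/ker_blk => Hab Hcd Hst Hnz /conf_blk [Ca Cb Cc Cd [[Cs1 Cs2] [Ct1 Ct2]]].
rewrite /evec in Ca Cb Cc Cd *.
have s0 : s = 0 by lia.
have t0 : t = 0 by lia.
have [a0|a1] : a i0 0 = 0 \/ a i0 0 = 1.
  by move: (Ca i0); rewrite !mxE !eqxx /=; lia.
  exfalso; apply: Hnz; rewrite -(blkvec0 k).
  rewrite s0 t0; congr blkvec; apply/matrixP=> i j; rewrite (ord1 j);
  move: (Ca i) (Cb i) (Cc i) (Cd i) (Hab i) (Hcd i); rewrite !mxE ?eqxx ?andbT;
  case: (eqVneq i i0) => [->|_] /=; lia.
rewrite s0 t0; congr blkvec; apply/matrixP=> i j; rewrite (ord1 j);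
  move: (Ca i) (Cb i) (Cc i) (Cd i) (Hab i) (Hcd i); rewrite !mxE ?eqxx ?andbT;
  case: (eqVneq i i0) => [->|_] /=; lia.
Qed.

Lemma S3_min k x y : S3 x -> in_ker (A_mat k) y -> y <> 0 -> conf_le y x -> y = x.
Proof.
case=> i0 ->.
have [a [b [c [d [s [t ->]]]]]] := blkvec_surj _ y.
case/ker_blk => Hab Hcd Hst Hnz /conf_blk [Ca Cb Cc Cd [[Cs1 Cs2] [Ct1 Ct2]]].
rewrite /evec in Ca Cb Cc Cd *.
have s0 : s = 0 by lia.
have t0 : t = 0 by lia.
have [a0|a1] : c i0 0 = 0 \/ c i0 0 = 1.
  by move: (Cc i0); rewrite !mxE !eqxx /=; lia.
  exfalso; apply: Hnz; rewrite -(blkvec0 k).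
  rewrite s0 t0; congr blkvec; apply/matrixP=> i j; rewrite (ord1 j);
  move: (Ca i) (Cb i) (Cc i) (Cd i) (Hab i) (Hcd i); rewrite !mxE ?eqxx ?andbT;
  case: (eqVneq i i0) => [->|_] /=; lia.
rewrite s0 t0; congr blkvec; apply/matrixP=> i j; rewrite (ord1 j);
  move: (Ca i) (Cb i) (Cc i) (Cd i) (Hab i) (Hcd i); rewrite !mxE ?eqxx ?andbT;
  case: (eqVneq i i0) => [->|_] /=; lia.
Qed.

Lemma pm_min k (S : 'cV[int]_(ncols k) -> Prop) x :
  (forall x y, S x -> in_ker (A_mat k) y -> y <> 0 -> conf_le y x -> y = x) ->
  pm S x -> forall y, in_ker (A_mat k) y -> y <> 0 -> conf_le y x -> y = x.
Proof.
move=> H [Sx|Sx] y Ky Ny Cy; first exact: H.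
apply: oppr_inj; apply: H Sx _ _ _; [exact: kerN|exact: neq0N|exact/confN].
Qed.

Lemma S1_ker k x : @S1 k x -> in_ker (A_mat k) x /\ x <> 0.
Proof.
case=> v1 [v2 [h1 h2 ->]]; split.
  by apply/ker_blk; rewrite /ones; split=> [i|i|]; rewrite ?mxE // addrCA ?addNr ?subrr addr0.
by rewrite -(blkvec0 k) => /blkvec_inj [_ _ _ _ []].
Qed.

Lemma evec_neq0 k (i : 'I_k) : evec i <> 0.
Proof. by move/matrixP/(_ i 0); rewrite /evec !mxE !eqxx. Qed.

Lemma S2_ker k x : @S2 k x -> in_ker (A_mat k) x /\ x <> 0.
Proof.
case=> i0 ->; split.
  by apply/ker_blk; split=> [i|i|]; rewrite ?mxE ?addr0 ?addrN.
by rewrite -(blkvec0 k) => /blkvec_inj [/evec_neq0].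
Qed.

Lemma S3_ker k x : @S3 k x -> in_ker (A_mat k) x /\ x <> 0.
Proof.
case=> i0 ->; split.
  by apply/ker_blk; split=> [i|i|]; rewrite ?mxE ?addr0 ?addrN.
by rewrite -(blkvec0 k) => /blkvec_inj [_ _ /evec_neq0].
Qed.

Lemma pm_ker k (S : 'cV[int]_(ncols k) -> Prop) x :
  (forall x, S x -> in_ker (A_mat k) x /\ x <> 0) ->
  pm S x -> in_ker (A_mat k) x /\ x <> 0.
Proof.
move=> H [/H//|/H [K N]]; split; first by rewrite -[x]opprK; apply: kerN.
by move=> x0; apply: N; rewrite x0 oppr0.
Qed.

Lemma L1 k (a b c d : 'cV[int]_k) (s t : int) :
  (forall i, a i 0 + b i 0 = s) -> (forall i, c i 0 + d i 0 = t) -> s + t = 0 ->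
  s < 0 -> exists y, S1 y /\ conf_le y (@blkvec k a b c d s t).
Proof.
move=> Hab Hcd Hst Hs.
pose v1 : 'cV[int]_k := \col_i (if a i 0 < 0 then 1 else 0).
pose v2 : 'cV[int]_k := \col_i (if 0 < c i 0 then 1 else 0).
exists (blkvec (-v1) (-ones k + v1) v2 (ones k - v2) (-1) 1); split.
  by exists v1, v2; split => // i; rewrite /v1 /v2 mxE; case: ifP; auto.
apply/conf_blk; rewrite /ones; split; try (move=> i; move: (Hab i) (Hcd i);
  rewrite !mxE; case: ifPn; rewrite -?leNgt => h; lia); split; lia.
Qed.


Lemma L2 k (a b c d : 'cV[int]_k) (s t : int) i :
  0 < a i 0 -> a i 0 + b i 0 = 0 ->
  exists y, S2 y /\ conf_le y (@blkvec k a b c d s t).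
Proof.
move=> Ha Hab; exists (blkvec (evec i) (- evec i) 0 0 0 0); split; first by exists i.
apply/conf_blk; rewrite /evec; split; try (move=> j; rewrite !mxE ?eqxx ?andbT;
  case: (eqVneq j i) => [->|_] /=; lia); split; lia.
Qed.

Lemma L3 k (a b c d : 'cV[int]_k) (s t : int) i :
  0 < c i 0 -> c i 0 + d i 0 = 0 ->
  exists y, S3 y /\ conf_le y (@blkvec k a b c d s t).
Proof.
move=> Ha Hab; exists (blkvec 0 0 (evec i) (- evec i) 0 0); split; first by exists i.
apply/conf_blk; rewrite /evec; split; try (move=> j; rewrite !mxE ?eqxx ?andbT;
  case: (eqVneq j i) => [->|_] /=; lia); split; lia.
Qed.

Lemma below_pos n (S : 'cV[int]_n -> Prop) x :
  (exists y, S y /\ conf_le y x) -> exists y, pm S y /\ conf_le y x.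
Proof. by case=> y [Sy Cy]; exists y; split=> //; left. Qed.

Lemma below_neg n (S : 'cV[int]_n -> Prop) x :
  (exists y, S y /\ conf_le y (- x)) -> exists y, pm S y /\ conf_le y x.
Proof.
case=> y [Sy Cy]; exists (- y); split; first by right; rewrite opprK.
by apply/confN; rewrite opprK.
Qed.

Lemma below k x : in_ker (A_mat k) x -> x <> 0 ->
  (exists y, pm (@S1 k) y /\ conf_le y x) \/ (exists y, pm (@S2 k) y /\ conf_le y x)
  \/ (exists y, pm (@S3 k) y /\ conf_le y x).
Proof.
have [a [b [c [d [s [t ->]]]]]] := blkvec_surj _ x.
move=> /ker_blk [Hab Hcd Hst] Hnz.
case: (ltgtP s 0) => [sneg|spos|s0].
- by left; apply: below_pos; apply: L1.
- left; apply: below_neg; rewrite blkvecN; apply: L1.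
  + by move=> i; rewrite !mxE; move: (Hab i); lra.
  + by move=> i; rewrite !mxE; move: (Hcd i); lra.
  + lra.
  + lra.
have t0 : t = 0 by lra.
case: (pickP (fun i => a i 0 != 0)) => [i /= /eqP hi|ha].
  right; left; have [ai|ai] : 0 < a i 0 \/ a i 0 < 0 by lra.
    by apply: below_pos; apply: (@L2 _ _ _ _ _ _ _ i ai); move: (Hab i); lra.
  apply: below_neg; rewrite blkvecN; apply: (@L2 _ _ _ _ _ _ _ i); rewrite !mxE; move: (Hab i); lra.
case: (pickP (fun i => c i 0 != 0)) => [i /= /eqP hi|hc].
  right; right; have [ai|ai] : 0 < c i 0 \/ c i 0 < 0 by lra.
    by apply: below_pos; apply: (@L3 _ _ _ _ _ _ _ i ai); move: (Hcd i); lra.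
  apply: below_neg; rewrite blkvecN; apply: (@L3 _ _ _ _ _ _ _ i); rewrite !mxE; move: (Hcd i); lra.
exfalso; apply: Hnz; rewrite -(blkvec0 k) s0 t0; congr blkvec;
  apply/matrixP => i j; rewrite (ord1 j) mxE;
  move/negbFE/eqP: (ha i) => ha'; move/negbFE/eqP: (hc i) => hc';
  move: (Hab i) (Hcd i); lra.
Qed.

Lemma pm_S1_form k x : pm (@S1 k) x ->
  exists a b c d s t, x = @blkvec k a b c d s t /\ s <> 0.
Proof.
case=> [[v1 [v2 [_ _ ->]]]|[v1 [v2 [_ _ e]]]].
  by do 6 eexists; split; first reflexivity.
rewrite -[x]opprK e blkvecN; do 6 eexists; split; first reflexivity.
by rewrite opprK.
Qed.

Lemma pm_S2_form k x : pm (@S2 k) x ->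
  exists i a b, x = @blkvec k a b 0 0 0 0 /\ a i 0 <> 0.
Proof.
case=> [[i ->]|[i e]].
  exists i; do 2 eexists; split; first reflexivity.
  by rewrite /evec mxE !eqxx.
rewrite -[x]opprK e blkvecN !oppr0; exists i; do 2 eexists; split; first reflexivity.
by rewrite /evec !mxE !eqxx.
Qed.

Lemma pm_S3_form k x : pm (@S3 k) x ->
  exists c d, x = @blkvec k 0 0 c d 0 0.
Proof.
case=> [[i ->]|[i e]]; first by do 2 eexists; reflexivity.
rewrite -[x]opprK e blkvecN !oppr0; do 2 eexists; reflexivity.
Qed.

Theorem theorem2 (k : nat) (hk : (1 <= k)%N) :
  (forall x : 'cV[int]_(ncols k),
     graver (A_mat k) x <-> [\/ pm (@S1 k) x, pm (@S2 k) x | pm (@S3 k) x]) /\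
  (forall x : 'cV[int]_(ncols k),
     ~ (pm (@S1 k) x /\ pm (@S2 k) x) /\
     ~ (pm (@S1 k) x /\ pm (@S3 k) x) /\
     ~ (pm (@S2 k) x /\ pm (@S3 k) x)).
Proof.
split=> x.
  split.
    case=> Kx Nx Mx.
    case: (below _ _ Kx Nx) => [[y [Py Cy]]|[[y [Py Cy]]|[y [Py Cy]]]].
    - have [Ky Ny] := pm_ker _ _ _ (@S1_ker k) Py.
      by rewrite -(Mx y Ky Ny Cy); apply: Or31.
    - have [Ky Ny] := pm_ker _ _ _ (@S2_ker k) Py.
      by rewrite -(Mx y Ky Ny Cy); apply: Or32.
    - have [Ky Ny] := pm_ker _ _ _ (@S3_ker k) Py.
      by rewrite -(Mx y Ky Ny Cy); apply: Or33.
  case=> P.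
  - have [Kx Nx] := pm_ker _ _ _ (@S1_ker k) P.
    by split=> //; exact: (pm_min _ _ _ (@S1_min k) P).
  - have [Kx Nx] := pm_ker _ _ _ (@S2_ker k) P.
    by split=> //; exact: (pm_min _ _ _ (@S2_min k) P).
  - have [Kx Nx] := pm_ker _ _ _ (@S3_ker k) P.
    by split=> //; exact: (pm_min _ _ _ (@S3_min k) P).
split; last split.
- case=> /pm_S1_form [a [b [c [d [s [t [-> ns]]]]]]] /pm_S2_form [i [a' [b' [e _]]]].
  by move: e => /blkvec_inj [_ _ _ _ []].
- case=> /pm_S1_form [a [b [c [d [s [t [-> ns]]]]]]] /pm_S3_form [c' [d' e]].
  by move: e => /blkvec_inj [_ _ _ _ []].
- case=> /pm_S2_form [i [a [b [-> na]]]] /pm_S3_form [c' [d' e]].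
  by move: e => /blkvec_inj [ea _ _ _ _]; apply: na; rewrite ea mxE.
Qed.
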